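(* In every dynamic network congestion game, every blind Nash equilibrium is a Nash equilibrium (i.e., no player can decrease their cost by deviating to an arbitrary, not necessarily blind, strategy).
   Context: Let $\mathcal F$ be the set of non-decreasing piecewise-affine functions $\mathbb N\to\mathbb N$ with finitely many pieces. An arena is $\mathcal A=(V,E,\mathsf{src},\mathsf{tgt})$ with $V$ finite, $E$ a partial function $V\times V\to\mathcal F$ (edge $e=(v,\ell_e,v')$ has cost function $\ell_e$); $\mathsf{tgt}$ has only a self-loop of constant cost $0$ and is reachable from every state. A dynamic NCG $(\mathcal A,n)$ has players $[n]=\{1,\dots,n\}$, all starting in $\mathsf{src}$. In each step each player $i$ simultaneously picks an edge $e_i$ leaving their current state, moves along it, and pays $\ell_{e_i}(u_i)$, $u_i$ being the number of players choosing edge $e_i$ in that step. A strategy for player $i$ maps each finite history (sequence of configurations $[n]\to V$ and steps from the initial configuration) to an edge leaving player $i$'s current state; $\mathrm{cost}_i(\sigma)$ is player $i$'s total payment along the outcome of profile $\sigma$ until reaching $\mathsf{tgt}$ ($+\infty$ if never). $\sigma$ is a Nash equilibrium if for every $k$, $\mathrm{cost}_k(\sigma)=\inf_{\sigma'_k}\mathrm{cost}_k(\langle\sigma_{-k},\sigma'_k\rangle)$ over all strategies $\sigma'_k$, where $\langle\sigma_{-k},\sigma'_k\rangle$ replaces $\sigma_k$ by $\sigma'_k$. A strategy is blind if it depends only on the sequence of states visited by the player itself (it follows a fixed path in $\mathcal A$). A blind Nash equilibrium is a profile of blind strategies in which no player can decrease their cost by switching to another blind strategy. *)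

(* Defs.v *)
From mathcomp Require Import all_boot all_order all_algebra.
From Stdlib Require Import ClassicalEpsilon.
Set Implicit Arguments. Unset Strict Implicit. Unset Printing Implicit Defensive.
Import GRing.Theory Num.Theory.

(* f : N -> N is piecewise affine with finitely many pieces:
   breakpoints bs = [b_1 < ... < b_m] (all > 0 w.l.o.g. not required), pieces
   [0,b_1), [b_1,b_2), ..., [b_m, oo); on piece j, f x = a_j x + c_j
   with rational coefficients (a_j, c_j) = coef`_j. *)
Definition piecewise_affine (f : nat -> nat) : Prop :=
  exists (bs : seq nat) (coef : seq (rat * rat)),
    size coef = (size bs).+1 /\ sorted ltn bs /\
    forall x : nat,
      (let j := count (fun b : nat => leq b x) bs in
      ((f x)%:R : rat) = (nth (0, 0) coef j).1 * x%:R + (nth (0, 0) coef j).2)%R.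

Definition in_F (f : nat -> nat) : Prop :=
  {homo f : x y / x <= y} /\ piecewise_affine f.

Record arena (V : finType) := Arena {
  edge : V -> V -> option (nat -> nat);
  src : V;
  tgt : V;
  edge_in_F : forall v w f, edge v w = Some f -> in_F f;
  tgt_only_loop : forall w, w != tgt -> edge tgt w = None;
  tgt_loop : edge tgt tgt = Some (fun _ => 0);
  tgt_reachable : forall v, connect (fun x y => isSome (edge x y)) v tgt
}.

Section Game.
Variables (V : finType) (A : arena V) (n : nat).

Definition config := 'I_n -> V.
Definition init_config : config := fun _ => src A.
(* a history is the list of configurations c_0 (= init_config), ..., c_t;
   steps are determined by consecutive configurations, since an edge is
   determined by its endpoints. *)
Definition history := seq config.
Definition current (h : history) : config := last init_config h.

(* a strategy maps a history to the next state (= the edge taken) *)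
Definition strategy := history -> V.
Definition profile := 'I_n -> strategy.

Definition valid_strategy (i : 'I_n) (s : strategy) : Prop :=
  forall h : history, isSome (edge A (current h i) (s h)).

Definition valid_profile (sigma : profile) : Prop :=
  forall i, valid_strategy i (sigma i).

Definition blind (i : 'I_n) (s : strategy) : Prop :=
  forall h h' : history,
    map (fun c => c i) h = map (fun c => c i) h' -> s h = s h'.

Fixpoint hist (sigma : profile) (t : nat) : history :=
  match t with
  | 0 => [:: init_config]
  | t'.+1 => let h := hist sigma t' in rcons h (fun i => sigma i h)
  end.

Definition outcome (sigma : profile) (t : nat) : config :=
  current (hist sigma t).

Definition load (sigma : profile) (t : nat) (i : 'I_n) : nat :=
  #|[set j | (outcome sigma t j == outcome sigma t i)
          && (outcome sigma t.+1 j == outcome sigma t.+1 i)]|.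

Definition step_cost (sigma : profile) (t : nat) (i : 'I_n) : nat :=
  match edge A (outcome sigma t i) (outcome sigma t.+1 i) with
  | Some f => f (load sigma t i)
  | None => 0
  end.

Definition paid (sigma : profile) (i : 'I_n) (T : nat) : nat :=
  \sum_(t < T) step_cost sigma t i.

(* cost: total payment until reaching tgt; None stands for +infinity *)
Definition cost (sigma : profile) (i : 'I_n) : option nat :=
  match excluded_middle_informative
          (exists t, outcome sigma t i == tgt A) with
  | left H => Some (paid sigma i (ex_minn H))
  | right _ => None
  end.

Definition cost_le (a b : option nat) : bool :=
  match a, b with
  | _, None => true
  | None, Some _ => false
  | Some x, Some y => x <= y
  end.

Definition deviate (sigma : profile) (k : 'I_n) (s : strategy) : profile :=
  fun j => if j == k then s else sigma j.

(* Nash equilibrium: cost_k(sigma) = inf over all (valid) sigma'_k of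
   cost_k(<sigma_-k, sigma'_k>); since N u {+oo} is well-ordered and
   sigma_k is itself a candidate, this is: no deviation is cheaper. *)
Definition nash_equilibrium (sigma : profile) : Prop :=
  valid_profile sigma /\
  forall (k : 'I_n) (s : strategy), valid_strategy k s ->
    cost_le (cost sigma k) (cost (deviate sigma k s) k).

Definition blind_nash_equilibrium (sigma : profile) : Prop :=
  valid_profile sigma /\ (forall i, blind i (sigma i)) /\
  forall (k : 'I_n) (s : strategy), valid_strategy k s -> blind k s ->
    cost_le (cost sigma k) (cost (deviate sigma k s) k).

End Game.

(* Main.v *)
Require Import Defs.
From mathcomp Require Import all_boot all_order all_algebra.
From Stdlib Require Import FunctionalExtensionality.

Section Aux.
Variables (V : finType) (A : arena V) (n : nat).

Lemma has_succ (v : V) : exists w, isSome (edge A v w).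
Proof.
case: (eqVneq v (tgt A)) => [->|ne]; first by exists (tgt A); rewrite tgt_loop.
move: (tgt_reachable A v) => /connectP [p].
case: p => [|w p] /=; first by move=> _ E; rewrite E eqxx in ne.
by case/andP=> e _ _; exists w.
Qed.

Definition nxt (v : V) : V := odflt v [pick w | isSome (edge A v w)].

Lemma nxtP v : isSome (edge A v (nxt v)).
Proof.
rewrite /nxt; case: pickP => [w //|H] /=.
by case: (has_succ v) => w; rewrite H.
Qed.

Lemma cost_ext (s1 s2 : profile V n) i :
  (forall t, hist A s1 t = hist A s2 t) -> cost A s1 i = cost A s2 i.
Proof.
move=> H.
have E : outcome A s1 = outcome A s2.
  by apply: functional_extensionality => t; rewrite /outcome H.
rewrite /cost /paid /step_cost /load E.
by [].
Qed.

End Aux.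

Theorem mainTheorem3 (V : finType) (A : arena V) (n : nat) (sigma : profile V n) :
  blind_nash_equilibrium A sigma -> nash_equilibrium A sigma.
Proof.
case=> Hv [_ Hb]; split => // k s Hs.
set sg' := deviate sigma k s.
pose P (m : nat) := map (fun c : config V n => c k) (hist A sg' m.-1).
pose g (p : seq V) := if p == P (size p) then outcome A sg' (size p) k
                      else @nxt V A (last (src A) p).
pose s' : strategy V n := fun h => g (map (fun c : config V n => c k) h).
have Hsize : forall t, size (hist A sg' t) = t.+1.
  by elim=> //= t IH; rewrite size_rcons IH.
have Hlast : forall h : history V n,
    last (src A) (map (fun c : config V n => c k) h) = current A h k.
  move=> h; rewrite /current.
  by elim/last_ind: h => //= h c _; rewrite map_rcons !last_rcons.
have Hval : valid_strategy A k s'.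
  move=> h; rewrite /s' /g; case: ifP => [/eqP E|_]; last by rewrite Hlast nxtP.
  have Hs1 : size h = (size h).-1.+1.
    move: (congr1 size E); rewrite /P !size_map Hsize.
    by case: (size h).
  rewrite size_map.
  have Hc : current A h k = outcome A sg' (size h).-1 k.
    rewrite -Hlast E /P /outcome Hlast size_map //.
  rewrite Hc Hs1 /outcome /= /current last_rcons -/(current A _) -/(outcome A _ _).
  idtac.
  have := Hs (hist A sg' (size h).-1); by rewrite /sg' /deviate eqxx.
have Hbl : blind k s'.
  by move=> h h' E; rewrite /s' E.
have Hhist : forall t, hist A (deviate sigma k s') t = hist A sg' t.
  elim=> //= t IH; rewrite IH; congr rcons.
  apply: functional_extensionality => j.
  rewrite /deviate; case: (eqVneq j k) => [->|ne]; last by rewrite /sg' /deviate (negPf ne).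
  rewrite /s' /g size_map Hsize /P /= eqxx /outcome /= /current last_rcons.
  by rewrite /sg' /deviate eqxx.
rewrite -(@cost_ext V A n _ _ k Hhist).
exact: Hb.
Qed.
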